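(* If $\Gamma\vdash_r M:\delta\mid\Delta$ (derivable in the restricted type system) for some restricted basis $\Gamma$, restricted name context $\Delta$ and $\delta\in\Lambda^r_D$, then $M$ is strongly normalising.
   Context: $\lambda\mu$ terms and commands: $M::=x\mid\lambda x.M\mid MN\mid\mu\alpha.\mathsf C$ and $\mathsf C::=[\alpha]M$. Structural substitution $T[\alpha\Leftarrow L]$ replaces, recursively, every subterm $[\alpha]N$ by $[\alpha](N[\alpha\Leftarrow L])L$. $M$ is strongly normalising if there is no infinite reduction sequence from $M$ for the compatible closure of $(\lambda x.M)N\to M[N/x]$ and $(\mu\alpha.\mathsf C)N\to\mu\alpha.\mathsf C[\alpha\Leftarrow N]$. (The paper notes that adding the renaming rule $[\alpha]\mu\beta.\mathsf C\to\mathsf C[\alpha/\beta]$ does not change this set.) Full type system. $R=\{\bot\sqsubset\top\}$ and $\psi=\psi_\top$. - $\Lambda_R$: $\rho::=\psi_a\mid\omega\mid\rho\wedge\rho$; - $\Lambda_D$: $\delta::=\rho\mid\kappa\to\rho\mid\omega\mid\delta\wedge\delta$; - $\Lambda_C$: $\kappa::=\delta\times\kappa\mid\omega\mid\kappa\wedge\kappa$. The relations $\le_R,\le_D,\le_C$ are the least reflexive, transitive relations with $\sigma\wedge\tau\le\sigma,\tau$, $\sigma\le\omega$, $\rho\le\sigma,\tau\Rightarrow\rho\le\sigma\wedge\tau$, and additionally: - $\psi_\bot\sim\omega$ and $\psi_{a\sqcup b}\sim\psi_a\wedge\psi_b$; - $\le_R\subseteq\le_D$; - $\omega\le_D\omega\to\omega$;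 - $\psi_a\le_D\omega\to\psi_a\le_D\psi_a$; - $\omega\le_C\omega\times\omega$; - $(\kappa\to\rho_1)\wedge(\kappa\to\rho_2)\le_D\kappa\to(\rho_1\wedge\rho_2)$; - $(\delta_1\times\kappa_1)\wedge(\delta_2\times\kappa_2)\le_C(\delta_1\wedge\delta_2)\times(\kappa_1\wedge\kappa_2)$; - $\to$ is contravariant in $\Lambda_C$ and covariant in $\Lambda_R$; - $\times$ is covariant in both arguments. Assignment rules, with bases $\Gamma$ (finite maps variables $\to\Lambda_D$), contexts $\Delta$ (finite maps names $\to\Lambda_C$), and $\Gamma(x)$, $\Delta(\alpha)$ equal to $\omega$ outside the domain: - (Ax) $\Gamma,x{:}\delta\vdash x:\delta\mid\Delta$. - (Abs) From $\Gamma\vdash M:\kappa\to\rho\mid\Delta$, $\Gamma(x)=\delta$, infer $\Gamma\setminus x\vdash\lambda x.M:(\delta\times\kappa)\to\rho\mid\Delta$. - (App) From $\Gamma\vdash M:(\delta\times\kappa)\to\rho\mid\Delta$ and $\Gamma\vdash N:\delta\mid\Delta$, infer $\Gamma\vdash MN:\kappa\to\rho\mid\Delta$. - (Cmd) From $\Gamma\vdash M:\delta\mid\Delta$, $\Delta(\alpha)=\kappa$, infer $\Gamma\vdash[\alpha]M:\delta\times\kappa\mid\Delta$. - ($\mu$) From $\Gamma\vdash\mathsf C:(\kappa'\to\rho)\times\kappa'\mid\Delta$, $\Delta(\alpha)=\kappa$, infer $\Gamma\vdash\mu\alpha.\mathsf C:\kappa\to\rho\mid\Delta\setminus\alpha$.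 - ($\wedge$), ($\omega$) ($T:\omega$), and ($\le$) subsumption. Restricted system. Restricted types: $\Lambda^r_D$: $\delta::=\kappa\to\psi\mid\delta\wedge\delta$; $\Lambda^r_C$: $\kappa::=\omega\mid\delta\times\kappa\mid\kappa\wedge\kappa$. A restricted basis (resp. context) assigns only types in $\Lambda^r_D$ (resp. $\Lambda^r_C$). A judgement is restricted if its basis and context are restricted and its predicate is in $\Lambda^r_D\cup\Lambda^r_C$. $\Gamma\vdash_r T:\sigma\mid\Delta$ means the judgement is derivable with the rules above, without rule ($\omega$), and with every judgement in the derivation restricted. *)

(* Defs.v *)
From Stdlib Require Import Arith Bool.

Inductive term : Type :=
| Var : nat -> term              (* de Bruijn index of a term variable *)
| Lam : term -> term
| App : term -> term -> term
| Mu  : cmd -> term              (* binds name 0 *)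
with cmd : Type :=
| Named : nat -> term -> cmd.    (* [alpha]M, alpha a de Bruijn name index *)

Fixpoint liftV (c : nat) (t : term) : term :=
  match t with
  | Var n => Var (if Nat.leb c n then S n else n)
  | Lam M => Lam (liftV (S c) M)
  | App M N => App (liftV c M) (liftV c N)
  | Mu C => Mu (liftVc c C)
  end
with liftVc (c : nat) (C : cmd) : cmd :=
  match C with Named a M => Named a (liftV c M) end.

Fixpoint liftN (c : nat) (t : term) : term :=
  match t with
  | Var n => Var n
  | Lam M => Lam (liftN c M)
  | App M N => App (liftN c M) (liftN c N)
  | Mu C => Mu (liftNc (S c) C)
  end
with liftNc (c : nat) (C : cmd) : cmd :=
  match C with
  | Named a M => Named (if Nat.leb c a then S a else a) (liftN c M)
  end.

(* capture-avoiding substitution M[N/k] (variable k removed) *)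
Fixpoint substV (k : nat) (N : term) (t : term) : term :=
  match t with
  | Var n => if Nat.eqb n k then N
             else if Nat.ltb k n then Var (pred n) else Var n
  | Lam M => Lam (substV (S k) (liftV 0 N) M)
  | App M1 M2 => App (substV k N M1) (substV k N M2)
  | Mu C => Mu (substVc k (liftN 0 N) C)
  end
with substVc (k : nat) (N : term) (C : cmd) : cmd :=
  match C with Named a M => Named a (substV k N M) end.

(* structural substitution T[a <= L]: every [a]N becomes [a](N[a<=L])L *)
Fixpoint ssub (a : nat) (L : term) (t : term) : term :=
  match t with
  | Var n => Var n
  | Lam M => Lam (ssub a (liftV 0 L) M)
  | App M N => App (ssub a L M) (ssub a L N)
  | Mu C => Mu (ssubc (S a) (liftN 0 L) C)
  end
with ssubc (a : nat) (L : term) (C : cmd) : cmd :=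
  match C with
  | Named b M =>
      if Nat.eqb b a then Named b (App (ssub a L M) L)
      else Named b (ssub a L M)
  end.

Inductive step : term -> term -> Prop :=
| st_beta M N : step (App (Lam M) N) (substV 0 N M)
| st_mu C N : step (App (Mu C) N) (Mu (ssubc 0 (liftN 0 N) C))
| st_lam M M' : step M M' -> step (Lam M) (Lam M')
| st_appl M M' N : step M M' -> step (App M N) (App M' N)
| st_appr M N N' : step N N' -> step (App M N) (App M N')
| st_mucong C C' : stepc C C' -> step (Mu C) (Mu C')
with stepc : cmd -> cmd -> Prop :=
| stc_named a M M' : step M M' -> stepc (Named a M) (Named a M').

Definition SN (M : term) : Prop := Acc (fun N M0 => step M0 N) M.

(* One raw syntax; the three classes Lambda_R, Lambda_D, Lambda_C are
   carved out by predicates (omega and the rho's are shared).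
   Psi false = psi_bot, Psi true = psi_top = psi. *)
Inductive ty : Type :=
| Psi : bool -> ty
| Om  : ty
| And : ty -> ty -> ty
| Arr : ty -> ty -> ty
| Prod : ty -> ty -> ty.

Fixpoint isR (t : ty) : bool :=
  match t with
  | Psi _ => true
  | Om => true
  | And a b => isR a && isR b
  | _ => false
  end.

Fixpoint isD (t : ty) : bool :=
  match t with
  | Psi _ => true
  | Om => true
  | And a b => isD a && isD b
  | Arr k r => isC k && isR r
  | Prod _ _ => false
  end
with isC (t : ty) : bool :=
  match t with
  | Om => true
  | Prod d k => isD d && isC k
  | And a b => isC a && isC b
  | _ => false
  end.

Fixpoint isRD (t : ty) : bool :=
  match t with
  | Arr k (Psi true) => isRC k
  | And a b => isRD a && isRD b
  | _ => false
  end
with isRC (t : ty) : bool :=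
  match t with
  | Om => true
  | Prod d k => isRD d && isRC k
  | And a b => isRC a && isRC b
  | _ => false
  end.

Inductive srt : Type := SR | SD | SC.

Definition inS (s : srt) (t : ty) : bool :=
  match s with SR => isR t | SD => isD t | SC => isC t end.

Inductive sub : srt -> ty -> ty -> Prop :=
| sub_refl s t : inS s t = true -> sub s t t
| sub_trans s t u v : sub s t u -> sub s u v -> sub s t v
| sub_andl s t u : inS s t = true -> inS s u = true -> sub s (And t u) t
| sub_andr s t u : inS s t = true -> inS s u = true -> sub s (And t u) u
| sub_top s t : inS s t = true -> sub s t Om
| sub_glb s t u v : sub s t u -> sub s t v -> sub s t (And u v)
| sub_bot1 : sub SR (Psi false) Om
| sub_bot2 : sub SR Om (Psi false)
| sub_join1 a b : sub SR (Psi (a || b)) (And (Psi a) (Psi b))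
| sub_join2 a b : sub SR (And (Psi a) (Psi b)) (Psi (a || b))
| sub_RD t u : sub SR t u -> sub SD t u
| sub_om_arr : sub SD Om (Arr Om Om)
| sub_psi_arr a : sub SD (Psi a) (Arr Om (Psi a))
| sub_arr_psi a : sub SD (Arr Om (Psi a)) (Psi a)
| sub_om_prod : sub SC Om (Prod Om Om)
| sub_arr_and k r1 r2 :
    isC k = true -> isR r1 = true -> isR r2 = true ->
    sub SD (And (Arr k r1) (Arr k r2)) (Arr k (And r1 r2))
| sub_prod_and d1 k1 d2 k2 :
    isD d1 = true -> isC k1 = true -> isD d2 = true -> isC k2 = true ->
    sub SC (And (Prod d1 k1) (Prod d2 k2)) (Prod (And d1 d2) (And k1 k2))
| sub_arr k k' r r' : sub SC k' k -> sub SR r r' -> sub SD (Arr k r) (Arr k' r')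
| sub_prod d d' k k' : sub SD d d' -> sub SC k k' -> sub SC (Prod d k) (Prod d' k').

(* finite partial maps: variables (resp. names) -> types; None = outside domain *)
Definition basis := nat -> option ty.
Definition ctx := nat -> option ty.

Definition finite_dom (f : nat -> option ty) : Prop :=
  exists N, forall n, N <= n -> f n = None.

(* Gamma(x), Delta(alpha): omega outside the domain *)
Definition getT (f : nat -> option ty) (n : nat) : ty :=
  match f n with Some t => t | None => Om end.

(* removal of the de Bruijn index 0 (the bound variable / name) *)
Definition tailM (f : nat -> option ty) : nat -> option ty := fun n => f (S n).

Definition rbasis (G : basis) : Prop :=
  finite_dom G /\ forall x t, G x = Some t -> isRD t = true.

Definition rctx (D : ctx) : Prop :=
  finite_dom D /\ forall a t, D a = Some t -> isRC t = true.

Definition rjudg (G : basis) (D : ctx) (s : ty) : Prop :=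
  rbasis G /\ rctx D /\ (isRD s = true \/ isRC s = true).

(* ---------- Restricted derivability  G |-_r T : s | D ----------
   The rules of the full system except (omega); every judgement of
   the derivation is required to be restricted. *)
Inductive rty : basis -> term -> ty -> ctx -> Prop :=
| r_ax G D x d :
    G x = Some d -> isD d = true -> rjudg G D d ->
    rty G (Var x) d D
| r_abs G D M k r :
    rty G M (Arr k r) D -> isC k = true -> isR r = true ->
    isD (getT G 0) = true ->
    rjudg (tailM G) D (Arr (Prod (getT G 0) k) r) ->
    rty (tailM G) (Lam M) (Arr (Prod (getT G 0) k) r) D
| r_app G D M N d k r :
    rty G M (Arr (Prod d k) r) D -> rty G N d D ->
    isD d = true -> isC k = true -> isR r = true ->
    rjudg G D (Arr k r) ->
    rty G (App M N) (Arr k r) D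
| r_mu G D C k' r :
    rtyc G C (Prod (Arr k' r) k') D -> isC k' = true -> isR r = true ->
    isC (getT D 0) = true ->
    rjudg G (tailM D) (Arr (getT D 0) r) ->
    rty G (Mu C) (Arr (getT D 0) r) (tailM D)
| r_and G D M s t :
    rty G M s D -> rty G M t D -> rjudg G D (And s t) ->
    rty G M (And s t) D
| r_sub G D M s t :
    rty G M s D -> sub SD s t -> rjudg G D t ->
    rty G M t D
with rtyc : basis -> cmd -> ty -> ctx -> Prop :=
| r_cmd G D a M d :
    rty G M d D -> isD d = true -> isC (getT D a) = true ->
    rjudg G D (Prod d (getT D a)) ->
    rtyc G (Named a M) (Prod d (getT D a)) D
| rc_and G D C s t :
    rtyc G C s D -> rtyc G C t D -> rjudg G D (And s t) ->
    rtyc G C (And s t) D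
| rc_sub G D C s t :
    rtyc G C s D -> sub SC s t -> rjudg G D t ->
    rtyc G C t D.

(* Main.v *)
Require Import Defs.
From Stdlib Require Import Arith Bool List Lia FunctionalExtensionality.
Import ListNotations.

Scheme term_mut := Induction for term Sort Prop
with cmd_mut := Induction for cmd Sort Prop.
Combined Scheme term_cmd_mut from term_mut, cmd_mut.

Definition upR (f : nat -> nat) (n : nat) : nat :=
  match n with 0 => 0 | S m => S (f m) end.

Fixpoint ren (xi ze : nat -> nat) (t : term) : term :=
  match t with
  | Var n => Var (xi n)
  | Lam M => Lam (ren (upR xi) ze M)
  | App M N => App (ren xi ze M) (ren xi ze N)
  | Mu C => Mu (renc xi (upR ze) C)
  end
with renc (xi ze : nat -> nat) (C : cmd) : cmd :=
  match C with Named a M => Named (ze a) (ren xi ze M) end.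

Fixpoint apps (M : term) (l : list term) : term :=
  match l with [] => M | N :: l' => apps (App M N) l' end.

Definition upV (s : nat -> term) (n : nat) : term :=
  match n with 0 => Var 0 | S m => ren S (fun x => x) (s m) end.
Definition upTV (th : nat -> list term) (a : nat) : list term :=
  map (ren S (fun x => x)) (th a).
Definition upS (s : nat -> term) (n : nat) : term := ren (fun x => x) S (s n).
Definition upN (th : nat -> list term) (a : nat) : list term :=
  match a with 0 => [] | S b => map (ren (fun x => x) S) (th b) end.

Fixpoint inst (s : nat -> term) (ze : nat -> nat) (th : nat -> list term) (t : term) : term :=
  match t with
  | Var n => s n
  | Lam M => Lam (inst (upV s) ze (upTV th) M)
  | App M N => App (inst s ze th M) (inst s ze th N)
  | Mu C => Mu (instc (upS s) (upR ze) (upN th) C)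
  end
with instc (s : nat -> term) (ze : nat -> nat) (th : nat -> list term) (C : cmd) : cmd :=
  match C with Named a M => Named (ze a) (apps (inst s ze th M) (th a)) end.

Lemma apps_app M l1 l2 : apps M (l1 ++ l2) = apps (apps M l1) l2.
Proof. revert M; induction l1; simpl; auto. Qed.

Lemma ren_apps xi ze M l : ren xi ze (apps M l) = apps (ren xi ze M) (map (ren xi ze) l).
Proof. revert M; induction l; simpl; auto. Qed.

Lemma inst_apps s ze th M l : inst s ze th (apps M l) = apps (inst s ze th M) (map (inst s ze th) l).
Proof. revert M; induction l; simpl; auto. Qed.

Lemma ren_id_all : (forall t, ren (fun x => x) (fun x => x) t = t) /\
                   (forall c, renc (fun x => x) (fun x => x) c = c).
Proof.
  assert (E : upR (fun x => x) = (fun x => x)) by (extensionality n; destruct n; auto).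
  apply term_cmd_mut; intros; simpl; rewrite ?E; congruence.
Qed.
Lemma ren_id t : ren (fun x => x) (fun x => x) t = t.
Proof. apply ren_id_all. Qed.

Lemma ren_ren_all : (forall t x1 z1 x2 z2, ren x2 z2 (ren x1 z1 t) = ren (fun n => x2 (x1 n)) (fun n => z2 (z1 n)) t) /\
                    (forall c x1 z1 x2 z2, renc x2 z2 (renc x1 z1 c) = renc (fun n => x2 (x1 n)) (fun n => z2 (z1 n)) c).
Proof.
  apply term_cmd_mut; intros; simpl; rewrite ?ren_apps, ?inst_apps, ?H, ?H0, ?apps_app; try reflexivity; repeat f_equal.
  all: try (extensionality n; destruct n; simpl; auto).
  all: unfold upTV, upS; rewrite ?map_app, ?map_map;
    first [ reflexivity
          | rewrite ?inst_ren, ?ren_inst, ?ren_ren; reflexivity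
          | f_equal; apply map_ext; intros; rewrite ?inst_ren, ?ren_inst, ?ren_ren; reflexivity
          | apply map_ext; intros; rewrite ?inst_ren, ?ren_inst, ?ren_ren; reflexivity ].
Qed.
Lemma ren_ren t x1 z1 x2 z2 : ren x2 z2 (ren x1 z1 t) = ren (fun n => x2 (x1 n)) (fun n => z2 (z1 n)) t.
Proof. apply ren_ren_all. Qed.

Definition nils : nat -> list term := fun _ => [].

Lemma ren_inst_var_all : (forall t xi ze, ren xi ze t = inst (fun n => Var (xi n)) ze nils t) /\
                         (forall c xi ze, renc xi ze c = instc (fun n => Var (xi n)) ze nils c).
Proof.
  apply term_cmd_mut; intros; simpl; rewrite ?ren_apps, ?inst_apps, ?H, ?H0, ?apps_app; try reflexivity; repeat f_equal.
  all: try (extensionality n; destruct n; simpl; auto).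
  all: unfold upTV, upS; rewrite ?map_app, ?map_map;
    first [ reflexivity
          | rewrite ?inst_ren, ?ren_inst, ?ren_ren; reflexivity
          | f_equal; apply map_ext; intros; rewrite ?inst_ren, ?ren_inst, ?ren_ren; reflexivity
          | apply map_ext; intros; rewrite ?inst_ren, ?ren_inst, ?ren_ren; reflexivity ].
Qed.
Lemma ren_inst_var t xi ze : ren xi ze t = inst (fun n => Var (xi n)) ze nils t.
Proof. apply ren_inst_var_all. Qed.

Lemma inst_id t : inst Var (fun x => x) nils t = t.
Proof.
  rewrite <- (ren_id t) at 2. rewrite ren_inst_var. reflexivity.
Qed.

Lemma inst_ren_all : (forall t s ze th xi z1, inst s ze th (ren xi z1 t) = inst (fun n => s (xi n)) (fun n => ze (z1 n)) (fun a => th (z1 a)) t) /\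
                     (forall c s ze th xi z1, instc s ze th (renc xi z1 c) = instc (fun n => s (xi n)) (fun n => ze (z1 n)) (fun a => th (z1 a)) c).
Proof.
  apply term_cmd_mut; intros; simpl; rewrite ?ren_apps, ?inst_apps, ?H, ?H0, ?apps_app; try reflexivity; repeat f_equal.
  all: try (extensionality n; destruct n; simpl; auto).
  all: unfold upTV, upS; rewrite ?map_app, ?map_map;
    first [ reflexivity
          | rewrite ?inst_ren, ?ren_inst, ?ren_ren; reflexivity
          | f_equal; apply map_ext; intros; rewrite ?inst_ren, ?ren_inst, ?ren_ren; reflexivity
          | apply map_ext; intros; rewrite ?inst_ren, ?ren_inst, ?ren_ren; reflexivity ].
Qed.
Lemma inst_ren t s ze th xi z1 : inst s ze th (ren xi z1 t) = inst (fun n => s (xi n)) (fun n => ze (z1 n)) (fun a => th (z1 a)) t.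
Proof. apply inst_ren_all. Qed.
Lemma instc_ren c s ze th xi z1 : instc s ze th (renc xi z1 c) = instc (fun n => s (xi n)) (fun n => ze (z1 n)) (fun a => th (z1 a)) c.
Proof. apply inst_ren_all. Qed.

Lemma ren_inst_all : (forall t s ze th xi z1, ren xi z1 (inst s ze th t) = inst (fun n => ren xi z1 (s n)) (fun n => z1 (ze n)) (fun a => map (ren xi z1) (th a)) t) /\
                     (forall c s ze th xi z1, renc xi z1 (instc s ze th c) = instc (fun n => ren xi z1 (s n)) (fun n => z1 (ze n)) (fun a => map (ren xi z1) (th a)) c).
Proof.
  apply term_cmd_mut; intros; simpl; rewrite ?ren_apps, ?inst_apps, ?H, ?H0, ?apps_app; try reflexivity; repeat f_equal.
  all: try (extensionality n; destruct n; simpl; auto).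
  all: unfold upTV, upS; rewrite ?map_app, ?map_map;
    first [ reflexivity
          | rewrite ?inst_ren, ?ren_inst, ?ren_ren; reflexivity
          | f_equal; apply map_ext; intros; rewrite ?inst_ren, ?ren_inst, ?ren_ren; reflexivity
          | apply map_ext; intros; rewrite ?inst_ren, ?ren_inst, ?ren_ren; reflexivity ].
Qed.
Lemma ren_inst t s ze th xi z1 : ren xi z1 (inst s ze th t) = inst (fun n => ren xi z1 (s n)) (fun n => z1 (ze n)) (fun a => map (ren xi z1) (th a)) t.
Proof. apply ren_inst_all. Qed.
Lemma renc_instc c s ze th xi z1 : renc xi z1 (instc s ze th c) = instc (fun n => ren xi z1 (s n)) (fun n => z1 (ze n)) (fun a => map (ren xi z1) (th a)) c.
Proof. apply ren_inst_all. Qed.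

Lemma inst_inst_all : (forall t s1 z1 t1 s2 z2 t2, inst s2 z2 t2 (inst s1 z1 t1 t) =
    inst (fun n => inst s2 z2 t2 (s1 n)) (fun n => z2 (z1 n)) (fun a => map (inst s2 z2 t2) (t1 a) ++ t2 (z1 a)) t) /\
  (forall c s1 z1 t1 s2 z2 t2, instc s2 z2 t2 (instc s1 z1 t1 c) =
    instc (fun n => inst s2 z2 t2 (s1 n)) (fun n => z2 (z1 n)) (fun a => map (inst s2 z2 t2) (t1 a) ++ t2 (z1 a)) c).
Proof.
  apply term_cmd_mut; intros; simpl; rewrite ?ren_apps, ?inst_apps, ?H, ?H0, ?apps_app; try reflexivity; repeat f_equal.
  all: try (extensionality n; destruct n; simpl; auto).
  all: unfold upTV, upS; rewrite ?map_app, ?map_map;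
    first [ reflexivity
          | rewrite ?inst_ren, ?ren_inst, ?ren_ren; reflexivity
          | f_equal; apply map_ext; intros; rewrite ?inst_ren, ?ren_inst, ?ren_ren; reflexivity
          | apply map_ext; intros; rewrite ?inst_ren, ?ren_inst, ?ren_ren; reflexivity ].
Qed.
Lemma inst_inst t s1 z1 t1 s2 z2 t2 : inst s2 z2 t2 (inst s1 z1 t1 t) =
    inst (fun n => inst s2 z2 t2 (s1 n)) (fun n => z2 (z1 n)) (fun a => map (inst s2 z2 t2) (t1 a) ++ t2 (z1 a)) t.
Proof. apply inst_inst_all. Qed.
Lemma instc_instc c s1 z1 t1 s2 z2 t2 : instc s2 z2 t2 (instc s1 z1 t1 c) =
    instc (fun n => inst s2 z2 t2 (s1 n)) (fun n => z2 (z1 n)) (fun a => map (inst s2 z2 t2) (t1 a) ++ t2 (z1 a)) c.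
Proof. apply inst_inst_all. Qed.

Definition liftn (c n : nat) : nat := if c <=? n then S n else n.

Lemma upR_id : upR (fun x => x) = (fun x => x).
Proof. extensionality n; destruct n; auto. Qed.

Lemma liftV_ren_all : (forall t c, liftV c t = ren (liftn c) (fun x => x) t) /\
                      (forall C c, liftVc c C = renc (liftn c) (fun x => x) C).
Proof.
  apply term_cmd_mut; intros; simpl; rewrite ?H, ?H0, ?upR_id; try reflexivity.
  f_equal. f_equal. extensionality n; destruct n; unfold liftn; simpl; auto.
  match goal with |- context [?c <=? n] => destruct (c <=? n) end; auto.
Qed.
Lemma liftV_ren t c : liftV c t = ren (liftn c) (fun x => x) t.
Proof. apply liftV_ren_all. Qed.

Lemma liftN_ren_all : (forall t c, liftN c t = ren (fun x => x) (liftn c) t) /\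
                      (forall C c, liftNc c C = renc (fun x => x) (liftn c) C).
Proof.
  apply term_cmd_mut; intros; simpl; rewrite ?H, ?H0, ?upR_id; try reflexivity.
  f_equal. f_equal. extensionality n; destruct n; unfold liftn; simpl; auto.
  match goal with |- context [?c <=? n] => destruct (c <=? n) end; auto.
Qed.
Lemma liftN_ren t c : liftN c t = ren (fun x => x) (liftn c) t.
Proof. apply liftN_ren_all. Qed.

Lemma liftn0 : liftn 0 = S.
Proof. extensionality n; reflexivity. Qed.

Lemma liftV0 t : liftV 0 t = ren S (fun x => x) t.
Proof. rewrite liftV_ren, liftn0. reflexivity. Qed.
Lemma liftN0 t : liftN 0 t = ren (fun x => x) S t.
Proof. rewrite liftN_ren, liftn0. reflexivity. Qed.

Definition sigk (k : nat) (N : term) (n : nat) : term :=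
  if n =? k then N else if k <? n then Var (pred n) else Var n.

Lemma substV_inst_all : (forall t k N, substV k N t = inst (sigk k N) (fun x => x) nils t) /\
                        (forall C k N, substVc k N C = instc (sigk k N) (fun x => x) nils C).
Proof.
  apply term_cmd_mut; intros; simpl; rewrite ?H, ?H0, ?upR_id; try reflexivity.
  - f_equal. f_equal. extensionality n; destruct n; unfold sigk; simpl; auto.
    rewrite liftV0. destruct (n =? k); auto. change (S k <? S n) with (k <? n). destruct (k <? n) eqn:E; simpl; auto. destruct n; simpl; auto. apply Nat.ltb_lt in E; lia.

  - f_equal. f_equal.
    + extensionality n; unfold upS, sigk. rewrite liftN0. destruct (n =? k); auto.
      destruct (k <? n); auto.
    + extensionality n; destruct n; reflexivity.
Qed.
Lemma substV_inst t k N : substV k N t = inst (sigk k N) (fun x => x) nils t.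
Proof. apply substV_inst_all. Qed.

Definition thk (a : nat) (L : term) (b : nat) : list term := if b =? a then [L] else [].

Lemma ssub_inst_all : (forall t a L, ssub a L t = inst Var (fun x => x) (thk a L) t) /\
                      (forall C a L, ssubc a L C = instc Var (fun x => x) (thk a L) C).
Proof.
  apply term_cmd_mut; intros; simpl; rewrite ?H, ?H0, ?upR_id; try reflexivity.
  - f_equal. f_equal.
    + extensionality n; destruct n; reflexivity.
    + extensionality n; unfold upTV, thk. rewrite liftV0. destruct (n =? a); reflexivity.
  - f_equal. f_equal.
    + extensionality n; destruct n; unfold thk; simpl; auto. rewrite liftN0. destruct (n =? a); reflexivity.
  - unfold thk. destruct (n =? a); simpl; reflexivity.
Qed.
Lemma ssub_inst t a L : ssub a L t = inst Var (fun x => x) (thk a L) t.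
Proof. apply ssub_inst_all. Qed.
Lemma ssubc_instc C a L : ssubc a L C = instc Var (fun x => x) (thk a L) C.
Proof. apply ssub_inst_all. Qed.

Definition scons (N : term) (s : nat -> term) (n : nat) : term :=
  match n with 0 => N | S m => s m end.

Lemma var_ren_inst t xi ze : inst (fun n => Var (xi n)) ze nils t = ren xi ze t.
Proof. rewrite ren_inst_var. reflexivity. Qed.

Lemma beta_inst N s ze th A :
  substV 0 N (inst (upV s) ze (upTV th) A) = inst (scons N s) ze th A.
Proof.
  rewrite substV_inst, inst_inst. f_equal.
  - extensionality n; destruct n; simpl; auto.
    rewrite inst_ren. unfold sigk; simpl. apply inst_id.
  - extensionality a; unfold upTV; rewrite map_map, app_nil_r.
    transitivity (map (fun x => x) (th a)); [|apply map_id].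
    apply map_ext; intros. rewrite inst_ren. apply inst_id.
Qed.

Lemma beta_inst2 B s ze th A :
  inst s ze th (substV 0 B A) = inst (scons (inst s ze th B) s) ze th A.
Proof.
  rewrite substV_inst, inst_inst. f_equal.
  extensionality n; destruct n; simpl; auto.
Qed.

Lemma mu_inst N' s ze th C :
  ssubc 0 (liftN 0 N') (instc (upS s) (upR ze) (upN th) C) =
  instc (upS s) (upR ze) (fun a => match a with 0 => [ren (fun x => x) S N'] | S b => map (ren (fun x => x) S) (th b) end) C.
Proof.
  rewrite ssubc_instc, liftN0, instc_instc. f_equal.
  - extensionality n; unfold upS. rewrite inst_ren. apply var_ren_inst.
  - extensionality a; destruct a; simpl; auto.
    rewrite app_nil_r, map_map. apply map_ext; intros. rewrite inst_ren. apply var_ren_inst.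
Qed.

Lemma mu_inst2 B s ze th C :
  instc (upS s) (upR ze) (upN th) (ssubc 0 (liftN 0 B) C) =
  instc (upS s) (upR ze) (fun a => match a with 0 => [ren (fun x => x) S (inst s ze th B)] | S b => map (ren (fun x => x) S) (th b) end) C.
Proof.
  rewrite ssubc_instc, liftN0, instc_instc. f_equal.
  extensionality a; destruct a; simpl; auto.
  rewrite inst_ren, ren_inst. reflexivity.
Qed.

Scheme step_mut := Induction for step Sort Prop
with stepc_mut := Induction for stepc Sort Prop.
Combined Scheme step_comb from step_mut, stepc_mut.

Inductive star : term -> term -> Prop :=
| star_refl M : star M M
| star_step M N P : step M N -> star N P -> star M P.

Lemma star_trans M N P : star M N -> star N P -> star M P.
Proof. induction 1; intros; eauto using star_step. Qed.

Lemma star_one M N : step M N -> star M N.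
Proof. intros; eapply star_step; eauto using star_refl. Qed.

Lemma SN_step M N : SN M -> step M N -> SN N.
Proof. intros H Hs. destruct H as [H]. apply H, Hs. Qed.

Lemma SN_star M N : SN M -> star M N -> SN N.
Proof. intros H Hs; induction Hs; eauto using SN_step. Qed.

Inductive steps1 : list term -> list term -> Prop :=
| s1_hd N N' l : step N N' -> steps1 (N :: l) (N' :: l)
| s1_tl N l l' : steps1 l l' -> steps1 (N :: l) (N :: l').

Lemma step_apps_l X X' l : step X X' -> step (apps X l) (apps X' l).
Proof. revert X X'; induction l; simpl; intros; auto. apply IHl. constructor; auto. Qed.

Lemma step_apps_r X l l' : steps1 l l' -> step (apps X l) (apps X l').
Proof.
  intros H; revert X; induction H; simpl; intros.
  - apply step_apps_l. constructor; auto.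
  - apply IHsteps1.
Qed.

Lemma apps_step_inv H l Y : step (apps H l) Y ->
  (exists H', step H H' /\ Y = apps H' l) \/ (exists l', steps1 l l' /\ Y = apps H l') \/
  (exists A N l1, H = Lam A /\ l = N :: l1 /\ Y = apps (substV 0 N A) l1) \/
  (exists C N l1, H = Mu C /\ l = N :: l1 /\ Y = apps (Mu (ssubc 0 (liftN 0 N) C)) l1).
Proof.
  revert H Y; induction l as [|N l IH]; simpl; intros H Y Hs.
  - left. exists Y; auto.
  - destruct (IH _ _ Hs) as [[H' [Hs' E]]|[[l' [Hl E]]|[[A [N0 [l1 [E1 [E2 E3]]]]]|[C [N0 [l1 [E1 [E2 E3]]]]]]]].
    + inversion Hs'; subst.
      * right; right; left. exists M, N, l; auto.
      * right; right; right. exists C, N, l; auto.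
      * left. exists M'; auto.
      * right; left. exists (N' :: l); split; auto. constructor; auto.
    + right; left. exists (N :: l'); split; auto. constructor; auto.
    + discriminate.
    + discriminate.
Qed.

Lemma inst_step_all :
  (forall X Y, step X Y -> forall s ze th, step (inst s ze th X) (inst s ze th Y)) /\
  (forall C C', stepc C C' -> forall s ze th, stepc (instc s ze th C) (instc s ze th C')).
Proof.
  apply step_comb; intros; simpl.
  - rewrite beta_inst2, <- beta_inst. constructor.
  - rewrite mu_inst2, <- mu_inst. constructor.
  - constructor; auto.
  - constructor; auto.
  - constructor; auto.
  - constructor; auto.
  - constructor; apply step_apps_l; auto.
Qed.
Lemma inst_step X Y s ze th : step X Y -> step (inst s ze th X) (inst s ze th Y).
Proof. intros; apply inst_step_all; auto. Qed.
Lemma instc_step C C' s ze th : stepc C C' -> stepc (instc s ze th C) (instc s ze th C').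
Proof. intros; apply inst_step_all; auto. Qed.

Lemma ren_step X Y xi ze : step X Y -> step (ren xi ze X) (ren xi ze Y).
Proof. intros; rewrite !ren_inst_var; apply inst_step; auto. Qed.

Lemma ren_beta xi ze A B :
  substV 0 (ren xi ze B) (ren (upR xi) ze A) = ren xi ze (substV 0 B A).
Proof.
  rewrite !substV_inst, inst_ren, ren_inst. f_equal.
  extensionality n; destruct n; reflexivity.
Qed.

Lemma ren_mu xi ze B C :
  Mu (ssubc 0 (liftN 0 (ren xi ze B)) (renc xi (upR ze) C)) = ren xi ze (Mu (ssubc 0 (liftN 0 B) C)).
Proof.
  simpl. rewrite !ssubc_instc, !liftN0, instc_ren, renc_instc. f_equal. f_equal.
  extensionality a; destruct a; simpl; auto.
  rewrite !ren_ren. reflexivity.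
Qed.

Lemma ren_back_all :
  (forall X xi ze Y, step (ren xi ze X) Y -> exists X', step X X' /\ Y = ren xi ze X') /\
  (forall C xi ze C', stepc (renc xi ze C) C' -> exists C0, stepc C C0 /\ C' = renc xi ze C0).
Proof.
  apply term_cmd_mut; simpl; intros.
  - inversion H.
  - inversion H0; subst.
    match goal with Hs : step (ren _ _ _) _ |- _ => destruct (H _ _ _ Hs) as [X' [? ?]] end; subst.
    exists (Lam X'); split; [constructor; auto | reflexivity].
  - inversion H1; subst.
    + match goal with E : Lam _ = ren _ _ t |- _ => rename E into H3 end.
      destruct t; simpl in H3; try discriminate. injection H3; intros; subst; clear H3.
      exists (substV 0 t0 t); split; [constructor|]. apply ren_beta.
    + match goal with E : Mu _ = ren _ _ t |- _ => rename E into H3 end.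
      destruct t; simpl in H3; try discriminate. injection H3; intros; subst; clear H3.
      exists (Mu (ssubc 0 (liftN 0 t0) c)); split; [constructor|]. apply ren_mu.
    + match goal with Hs : step (ren _ _ t) _ |- _ => destruct (H _ _ _ Hs) as [X' [? ?]] end; subst.
      exists (App X' t0); split; [constructor; auto | reflexivity].
    + match goal with Hs : step (ren _ _ t0) _ |- _ => destruct (H0 _ _ _ Hs) as [X' [? ?]] end; subst.
      exists (App t X'); split; [constructor; auto | reflexivity].
  - inversion H0; subst.
    match goal with Hs : stepc (renc _ _ _) _ |- _ => destruct (H _ _ _ Hs) as [X' [? ?]] end; subst.
    exists (Mu X'); split; [constructor; auto | reflexivity].
  - inversion H0; subst.
    match goal with Hs : step (ren _ _ _) _ |- _ => destruct (H _ _ _ Hs) as [X' [? ?]] end; subst.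
    exists (Named n X'); split; [constructor; auto | reflexivity].
Qed.

Lemma SN_ren X xi ze : SN X -> SN (ren xi ze X).
Proof.
  induction 1 as [X _ IH]. constructor. intros Y HY.
  destruct (proj1 ren_back_all _ _ _ _ HY) as [X' [? ?]]; subst. apply IH; auto.
Qed.

Lemma SN_preimage (f : term -> term) :
  (forall x y, step x y -> step (f x) (f y)) -> forall x, SN (f x) -> SN x.
Proof.
  intros Hf x H. remember (f x) as y. revert x Heqy.
  induction H as [y _ IH]. intros x ->. constructor. intros x' Hx.
  eapply IH; eauto.
Qed.

Lemma SN_inst_back s ze th X : SN (inst s ze th X) -> SN X.
Proof. apply SN_preimage. intros; apply inst_step; auto. Qed.

Lemma SN_apps_back X l : SN (apps X l) -> SN X.
Proof. apply SN_preimage with (f := fun X => apps X l). intros; apply step_apps_l; auto. Qed.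

Lemma SN_Lam X : SN X -> SN (Lam X).
Proof.
  induction 1 as [X _ IH]. constructor. intros Y HY. inversion HY; subst. apply IH; auto.
Qed.

Lemma SN_MuNamed a X : SN X -> SN (Mu (Named a X)).
Proof.
  induction 1 as [X _ IH]. constructor. intros Y HY. inversion HY; subst.
  inversion H0; subst. apply IH; auto.
Qed.

Definition SNL (l : list term) : Prop := Acc (fun l' l0 => steps1 l0 l') l.

Lemma SNL_cons N : SN N -> forall l, SNL l -> SNL (N :: l).
Proof.
  induction 1 as [N HN IHN]. intros l Hl. induction Hl as [l Hl IHl].
  constructor. intros l' Hs. inversion Hs; subst.
  - apply IHN; auto. constructor; auto.
  - apply IHl; auto.
Qed.

Lemma Forall_SNL l : Forall SN l -> SNL l.
Proof.
  induction 1.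
  - constructor. intros y Hy; inversion Hy.
  - apply SNL_cons; auto.
Qed.

Lemma steps1_Forall l l' : steps1 l l' -> Forall SN l -> Forall SN l'.
Proof.
  induction 1; intros HF; inversion HF; subst; constructor; eauto using SN_step.
Qed.

Lemma steps1_length l l' : steps1 l l' -> length l = length l'.
Proof. induction 1; simpl; auto. Qed.

Lemma SN_var_apps x l : Forall SN l -> SN (apps (Var x) l).
Proof.
  intros HF. pose proof (Forall_SNL _ HF) as HL. revert HF.
  induction HL as [l _ IH]. intros HF. constructor. intros Y HY.
  destruct (apps_step_inv _ _ _ HY) as [[H' [Hs E]]|[[l' [Hl E]]|[[A [N0 [l1 [E1 [E2 E3]]]]]|[C [N0 [l1 [E1 [E2 E3]]]]]]]].
  - inversion Hs.
  - subst. apply IH; auto. eapply steps1_Forall; eauto.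
  - discriminate.
  - discriminate.
Qed.

Lemma star_App_l X X' N : star X X' -> star (App X N) (App X' N).
Proof. induction 1; eauto using star_refl, star_step, st_appl. Qed.
Lemma star_App_r X N N' : star N N' -> star (App X N) (App X N').
Proof. induction 1; eauto using star_refl, star_step, st_appr. Qed.
Lemma star_Lam X X' : star X X' -> star (Lam X) (Lam X').
Proof. induction 1; eauto using star_refl, star_step, st_lam. Qed.
Lemma star_MuNamed a X X' : star X X' -> star (Mu (Named a X)) (Mu (Named a X')).
Proof. induction 1; eauto using star_refl, star_step, st_mucong, stc_named. Qed.
Lemma star_apps_l X X' l : star X X' -> star (apps X l) (apps X' l).
Proof. induction 1; eauto using star_refl, star_step, step_apps_l. Qed.
Lemma star_apps_r X l l' : Forall2 star l l' -> star (apps X l) (apps X l').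
Proof.
  intros H; revert X; induction H; simpl; intros.
  - apply star_refl.
  - eapply star_trans; [apply star_apps_l, star_App_r; eauto | apply IHForall2].
Qed.
Lemma star_ren X X' xi ze : star X X' -> star (ren xi ze X) (ren xi ze X').
Proof. induction 1; eauto using star_refl, star_step, ren_step. Qed.

Lemma Forall2_map_star (f : term -> term) l l' :
  (forall x y, star x y -> star (f x) (f y)) -> Forall2 star l l' -> Forall2 star (map f l) (map f l').
Proof. intros Hf; induction 1; simpl; constructor; auto. Qed.

Lemma inst_star_all :
  (forall t s s' ze th th', (forall n, star (s n) (s' n)) -> (forall a, Forall2 star (th a) (th' a)) ->
     star (inst s ze th t) (inst s' ze th' t)) /\
  (forall C s s' ze th th', (forall n, star (s n) (s' n)) -> (forall a, Forall2 star (th a) (th' a)) ->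
     star (Mu (instc s ze th C)) (Mu (instc s' ze th' C))).
Proof.
  apply term_cmd_mut; simpl; intros.
  - auto.
  - apply star_Lam. apply H.
    + intros [|n]; simpl; [apply star_refl|apply star_ren; auto].
    + intros a; unfold upTV; apply Forall2_map_star; auto. intros; apply star_ren; auto.
  - eapply star_trans; [apply star_App_l; apply H; eauto | apply star_App_r; apply H0; eauto].
  - apply H.
    + intros n; unfold upS; apply star_ren; auto.
    + intros [|a]; simpl; [constructor|]. apply Forall2_map_star; auto. intros; apply star_ren; auto.
  - apply star_MuNamed. eapply star_trans; [apply star_apps_l; apply H; eauto | apply star_apps_r; auto].
Qed.

Lemma substV_star N N' X : star N N' -> star (substV 0 N X) (substV 0 N' X).
Proof.
  intros H. rewrite !substV_inst. apply inst_star_all.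
  - intros n; unfold sigk; destruct (n =? 0); auto using star_refl.
  - intros; constructor.
Qed.

Lemma substV_step N X X' : step X X' -> step (substV 0 N X) (substV 0 N X').
Proof. intros; rewrite !substV_inst; apply inst_step; auto. Qed.

Lemma beta_exp X : SN X -> forall L, SNL L -> forall N l, L = N :: l ->
  SN (apps (substV 0 N X) l) -> SN (apps (Lam X) (N :: l)).
Proof.
  induction 1 as [X HX IHX]. intros L HL. induction HL as [L HL IHL].
  intros N l EL Hs. subst L. constructor. intros Y HY.
  destruct (apps_step_inv _ _ _ HY) as [[H' [Hs' E]]|[[l' [Hl E]]|[[A [N0 [l1 [E1 [E2 E3]]]]]|[C [N0 [l1 [E1 [E2 E3]]]]]]]].
  - inversion Hs'; subst. eapply IHX; eauto. constructor; auto.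
    eapply SN_step; eauto. apply step_apps_l, substV_step; auto.
  - subst. inversion Hl; subst.
    + eapply IHL; eauto. eapply SN_star; eauto. apply star_apps_l, substV_star, star_one; auto.
    + eapply IHL; eauto. eapply SN_step; eauto. apply step_apps_r; auto.
  - injection E1; injection E2; intros; subst; auto.
  - discriminate.
Qed.

Definition thL (L : list term) (a : nat) : list term :=
  match a with 0 => map (ren (fun x => x) S) L | S _ => [] end.

Lemma instc_id C : instc Var (fun x => x) nils C = C.
Proof.
  rewrite <- (proj2 ren_inst_var_all). apply ren_id_all.
Qed.

Lemma mu_compose N L1 C :
  instc Var (fun x => x) (thL L1) (ssubc 0 (liftN 0 N) C) = instc Var (fun x => x) (thL (N :: L1)) C.
Proof.
  rewrite ssubc_instc, liftN0, instc_instc. f_equal.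
  extensionality a; destruct a; simpl; auto.
  rewrite inst_ren. f_equal. apply var_ren_inst.
Qed.

Lemma steps1_Forall2 l l' : steps1 l l' -> Forall2 star l l'.
Proof.
  induction 1.
  - constructor; [apply star_one; auto|]. clear H. induction l; constructor; auto using star_refl.
  - constructor; auto using star_refl.
Qed.

Lemma mu_exp n : forall L C, length L = n -> Forall SN L ->
  SN (Mu (instc Var (fun x => x) (thL L) C)) -> SN (apps (Mu C) L).
Proof.
  induction n as [|n IHn]; intros L C Hlen HF HZ.
  - destruct L; [|discriminate]. simpl.
    replace (thL []) with nils in HZ by (extensionality a; destruct a; reflexivity).
    rewrite instc_id in HZ; auto.
  - assert (HL : SNL L) by (apply Forall_SNL; auto).
    remember (Mu (instc Var (fun x => x) (thL L) C)) as Z.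
    revert C Hlen HF HeqZ. revert Z HZ. induction HL as [L HL IHL].
    intros Z HZ. induction HZ as [Z HZ IHZ]. intros C Hlen HF EZ.
    constructor. intros Y HY.
    destruct (apps_step_inv _ _ _ HY) as [[H' [Hs' E]]|[[l' [Hl E]]|[[A [N0 [l1 [E1 [E2 E3]]]]]|[C0 [N0 [l1 [E1 [E2 E3]]]]]]]].
    + inversion Hs'; subst. eapply IHZ; eauto. constructor. apply instc_step; auto.
    + subst. eapply IHL; eauto.
      * eapply SN_star; [constructor; exact HZ|].
        apply (proj2 inst_star_all).
        -- intros; apply star_refl.
        -- intros [|a]; simpl; [|constructor]. apply Forall2_map_star; [intros; apply star_ren; auto|].
           apply steps1_Forall2; auto.
      * rewrite <- (steps1_length _ _ Hl); auto.
      * eapply steps1_Forall; eauto.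
    + discriminate.
    + injection E1; intros; subst. inversion HF; subst.
      apply IHn; auto.
      rewrite mu_compose. constructor; exact HZ.
Qed.

Fixpoint hasTop (t : ty) : bool :=
  match t with Psi b => b | Om => false | And a b => hasTop a || hasTop b | _ => false end.

Definition Ptop (M : term) : Prop :=
  forall xi ze l, Forall SN l -> SN (apps (ren xi ze M) l).

Fixpoint pre (T : nat -> term) (n : nat) : list term :=
  match n with 0 => [] | S m => T 0 :: pre (fun i => T (S i)) m end.

Fixpoint semD (t : ty) (M : term) {struct t} : Prop :=
  match t with
  | Psi b => b = true -> Ptop M
  | Om => True
  | And a b => semD a M /\ semD b M
  | Arr k r => hasTop r = true -> forall xi ze T, semC k T -> forall n, SN (apps (ren xi ze M) (pre T n))
  | Prod _ _ => True
  end
with semC (t : ty) (T : nat -> term) {struct t} : Prop :=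
  match t with
  | Om => forall i, SN (T i)
  | Prod d k => semD d (T 0) /\ SN (T 0) /\ semC k (fun i => T (S i))
  | And a b => semC a T /\ semC b T
  | _ => False
  end.

Lemma pre_map f T n : map f (pre T n) = pre (fun i => f (T i)) n.
Proof. revert T; induction n; simpl; intros; auto. rewrite IHn; auto. Qed.

Lemma semC_SN k : forall T, semC k T -> forall i, SN (T i).
Proof.
  induction k; simpl; intros T H i; try contradiction.
  - auto.
  - destruct H as [H1 H2]. eauto.
  - destruct H as [_ [H1 H2]]. destruct i; auto. apply (IHk2 _ H2).
Qed.

Lemma Forall_pre T n : (forall i, SN (T i)) -> Forall SN (pre T n).
Proof. revert T; induction n; simpl; intros; constructor; auto. Qed.

Lemma semD_ren t : forall M xi ze, semD t M -> semD t (ren xi ze M).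
Proof.
  induction t; simpl; intros M xi ze HM.
  - intros Hb x z l Hl. rewrite ren_ren. apply HM; auto.
  - auto.
  - destruct HM; split; auto.
  - intros Hr x z T HT n. rewrite ren_ren. apply HM; auto.
  - auto.
Qed.

Lemma semC_ren k : forall T xi ze, semC k T -> semC k (fun i => ren xi ze (T i)).
Proof.
  induction k; simpl; intros T xi ze HT; try contradiction.
  - intros i; apply SN_ren; auto.
  - destruct HT; split; auto.
  - destruct HT as [H1 [H2 H3]]. split; [apply semD_ren; auto|]. split; [apply SN_ren; auto|].
    apply (IHk2 _ _ _ H3).
Qed.

Lemma semR t M : isR t = true -> (semD t M <-> (hasTop t = true -> Ptop M)).
Proof.
  induction t; simpl; intros H; try discriminate.
  - tauto.
  - split; auto. intros; discriminate.
  - apply andb_true_iff in H as [H1 H2]. rewrite IHt1, IHt2 by auto.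
    rewrite orb_true_iff. tauto.
Qed.

Definition subsem (s : srt) (t u : ty) : Prop :=
  match s with
  | SR => isR t = true /\ isR u = true /\ (hasTop u = true -> hasTop t = true)
  | SD => forall M, semD t M -> semD u M
  | SC => forall T, semC t T -> semC u T
  end.

Lemma pre_nth l : pre (fun i => nth i l (Var 0)) (length l) = l.
Proof. induction l; simpl; auto. f_equal. exact IHl. Qed.

Lemma SN_var x : SN (Var x).
Proof. constructor; intros y H; inversion H. Qed.

Lemma nth_SN l : Forall SN l -> forall i, SN (nth i l (Var 0)).
Proof.
  induction 1; intros [|i]; simpl; auto using SN_var.
Qed.

Lemma sub_sound s t u : sub s t u -> subsem s t u.
Proof.
  induction 1; simpl in *.
  - destruct s; simpl in *; auto; repeat split; auto.
  - destruct s; simpl in *; [intuition | eauto | eauto].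
  - destruct s; simpl in *.
    + rewrite H, H0; repeat split; auto. intros E; rewrite E; auto.
    + intros M [? ?]; auto.
    + intros T [? ?]; auto.
  - destruct s; simpl in *.
    + rewrite H, H0; repeat split; auto. intros E; rewrite E, orb_true_r; auto.
    + intros M [? ?]; auto.
    + intros T [? ?]; auto.
  - destruct s; simpl in *.
    + repeat split; auto; intros; discriminate.
    + auto.
    + intros T HT; eapply semC_SN; eauto.
  - destruct s; simpl in *.
    + destruct IHsub1 as [A1 [A2 A3]], IHsub2 as [B1 [B2 B3]]; rewrite A2, B2; repeat split; auto.
      intros E; apply orb_true_iff in E as [E|E]; auto.
    + intros; split; auto.
    + intros; split; auto.
  - repeat split; auto.
  - repeat split; auto.
  - repeat split; auto.
  - repeat split; auto.
  - destruct IHsub as [H1 [H2 H3]]. intros M HM.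
    pose proof (proj1 (semR t M H1) HM) as HM2. apply (proj2 (semR u M H2)). intros Hu; apply HM2, H3, Hu.
  - intros; discriminate.
  - intros M HM Ha xi ze T HT n. apply HM; auto. apply Forall_pre; auto.
  - intros M HM Ha xi ze l Hl. rewrite <- (pre_nth l). apply HM; auto. apply nth_SN; auto.
  - intros T HT. split; [exact I|split; auto].
  - intros M [G1 G2] Hr. apply orb_true_iff in Hr as [?|?]; auto.
  - intros T [[A1 [A2 A3]] [B1 [B2 B3]]]. split; [split; auto|split; [auto|split; auto]].
  - intros M HM Hr xi ze T HT n. destruct IHsub2 as [_ [_ Hh]]. apply HM; auto.
  - intros T [A1 [A2 A3]]. split; [auto|split; [auto|auto]].
Qed.

Lemma var_sem t : (isRD t = true -> forall x, semD t (Var x)) /\ (isRC t = true -> semC t (fun _ => Var 0)).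
Proof.
  induction t; simpl; split; intros H; try discriminate.
  - auto using SN_var.
  - apply andb_true_iff in H as [H1 H2]. intros; split; [apply IHt1|apply IHt2]; auto.
  - apply andb_true_iff in H as [H1 H2]. split; [apply IHt1|apply IHt2]; auto.
  - intros x Hr xi ze T HT n. simpl. apply SN_var_apps, Forall_pre. apply semC_SN with t1; auto.
  - apply andb_true_iff in H as [H1 H2]. split; [apply IHt1; auto|]. split; [apply SN_var|].
    apply IHt2; auto.
Qed.

Lemma RD_SN d M : isRD d = true -> semD d M -> SN M.
Proof.
  induction d; simpl; intros H HM; try discriminate.
  - apply andb_true_iff in H as [H1 H2]. destruct HM; eauto.
  - destruct d2; try discriminate. destruct b; try discriminate.
    pose proof (proj2 (var_sem d1) H) as HT.
    specialize (HM eq_refl (fun x => x) (fun x => x) _ HT 0). simpl in HM.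
    rewrite ren_id in HM; auto.
Qed.

Scheme rty_mut := Induction for rty Sort Prop
with rtyc_mut := Induction for rtyc Sort Prop.

Definition validS (G : basis) (s : nat -> term) : Prop := forall x, semD (getT G x) (s x).
Definition validN (D : ctx) (th : nat -> list term) (W : nat -> nat -> term) : Prop :=
  forall a, semC (getT D a) (W a) /\ exists n, th a = pre (W a) n.

Lemma rty_rjudg G M d D : rty G M d D -> rjudg G D d.
Proof. destruct 1; auto. Qed.

Lemma isRD_arr k r : isRD (Arr k r) = true -> r = Psi true /\ isRC k = true.
Proof. destruct r; try discriminate. destruct b; try discriminate. simpl; auto. Qed.

Lemma rjudg_arr G D k r : rjudg G D (Arr k r) -> r = Psi true /\ isRC k = true.
Proof. intros [_ [_ [H|H]]]; [apply isRD_arr; auto | simpl in H; discriminate]. Qed.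

Lemma rjudg_prod G D d k : rjudg G D (Prod d k) -> isRD d = true /\ isRC k = true.
Proof. intros [_ [_ [H|H]]]; simpl in H; [discriminate|]. apply andb_true_iff in H; auto. Qed.

Lemma lam_ren xi ze' s ze th M :
  ren xi ze' (Lam (inst (upV s) ze (upTV th) M)) =
  Lam (inst (upV (fun n => ren xi ze' (s n))) (fun n => ze' (ze n)) (upTV (fun a => map (ren xi ze') (th a))) M).
Proof.
  simpl. f_equal. rewrite ren_inst. f_equal.
  - extensionality n; destruct n; simpl; auto. rewrite !ren_ren; reflexivity.
  - extensionality a; unfold upTV; rewrite !map_map; apply map_ext; intros; rewrite !ren_ren; reflexivity.
Qed.

Lemma mu_ren xi ze' s ze th C :
  ren xi ze' (Mu (instc (upS s) (upR ze) (upN th) C)) =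
  Mu (instc (upS (fun n => ren xi ze' (s n))) (upR (fun n => ze' (ze n))) (upN (fun a => map (ren xi ze') (th a))) C).
Proof.
  simpl. f_equal. rewrite renc_instc. f_equal.
  - extensionality n; unfold upS; rewrite !ren_ren; reflexivity.
  - extensionality n; destruct n; reflexivity.
  - extensionality a; destruct a; simpl; auto. rewrite !map_map; apply map_ext; intros; rewrite !ren_ren; reflexivity.
Qed.

Lemma mu_sem_compose L s ze th C :
  instc Var (fun x => x) (thL L) (instc (upS s) (upR ze) (upN th) C) =
  instc (upS s) (upR ze) (fun a => match a with 0 => map (ren (fun x => x) S) L | S b => map (ren (fun x => x) S) (th b) end) C.
Proof.
  rewrite instc_instc. f_equal.
  - extensionality n; unfold upS; rewrite inst_ren; apply var_ren_inst.
  - extensionality a; destruct a; simpl; auto.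
    rewrite app_nil_r, map_map. apply map_ext; intros. rewrite inst_ren; apply var_ren_inst.
Qed.

Lemma validS_ren G s xi ze : validS G s -> validS G (fun n => ren xi ze (s n)).
Proof. intros H x; apply semD_ren, H. Qed.

Lemma validN_ren D th W xi ze : validN D th W ->
  validN D (fun a => map (ren xi ze) (th a)) (fun a i => ren xi ze (W a i)).
Proof.
  intros H a. destruct (H a) as [H1 [n H2]]. split; [apply semC_ren; auto|].
  exists n. rewrite H2, pre_map. reflexivity.
Qed.

Theorem sound : forall G M d D, rty G M d D ->
  forall s ze th W, validS G s -> validN D th W -> semD d (inst s ze th M).
Proof.
  intros G M d D H.
  induction H using rty_mut with
    (P0 := fun G C t D _ => forall s ze th W, validS G s -> validN D th W ->
             match C with Named a M => semC t (scons (inst s ze th M) (W a)) end).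
  -
    intros s ze th W HS HN. simpl. specialize (HS x). unfold getT in HS. rewrite e in HS. exact HS.
  -
    intros s ze th W HS HN.
    destruct (rjudg_arr _ _ _ _ r0) as [Er Hk]. subst r.
    simpl in Hk. apply andb_true_iff in Hk as [Hd Hk].
    cbn [semD]. intros _ xi ze' T HT n.
    change (inst s ze th (Lam M)) with (Lam (inst (upV s) ze (upTV th) M)). rewrite lam_ren.
    set (s2 := fun n => ren xi ze' (s n)).
    set (th2 := fun a => map (ren xi ze') (th a)).
    assert (HS2 : validS (tailM G) s2) by (apply validS_ren; auto).
    assert (HN2 : validN D th2 (fun a i => ren xi ze' (W a i))) by (apply validN_ren; auto).
    clearbody s2 th2.
    assert (HX : SN (inst (upV s2) (fun n => ze' (ze n)) (upTV th2) M)).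
    { assert (Hsem : semD (Arr k (Psi true)) (inst (upV s2) (fun n => ze' (ze n)) (upTV th2) M)).
      { apply IHrty with (W := fun a i => ren S (fun x => x) (ren xi ze' (W a i))).
        - intros [|x]; simpl.
          + apply (proj1 (var_sem _)); auto.
          + apply semD_ren. apply (HS2 x).
        - intros a. unfold upTV. destruct (HN2 a) as [H1 [m H2]]. split; [apply semC_ren; auto|].
          exists m. rewrite H2, pre_map. reflexivity. }
      apply RD_SN with (Arr k (Psi true)); auto. }
    destruct n as [|m].
    + simpl. apply SN_Lam; auto.
    + simpl pre. destruct HT as [HT1 [HT2 HT3]].
      apply beta_exp with (L := T 0 :: pre (fun i => T (S i)) m); auto.
      * apply Forall_SNL. constructor; auto. apply Forall_pre. apply semC_SN with k; auto.
      * rewrite beta_inst.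
        assert (Hsem : semD (Arr k (Psi true)) (inst (scons (T 0) s2) (fun n => ze' (ze n)) th2 M)).
        { apply IHrty with (W := fun a i => ren xi ze' (W a i)); auto.
          intros [|x]; simpl; auto. apply (HS2 x). }
        specialize (Hsem eq_refl (fun x => x) (fun x => x) _ HT3 m).
        rewrite ren_id in Hsem. exact Hsem.
  -
    intros s ze th W HS HN.
    pose proof (rty_rjudg _ _ _ _ H) as Hj.
    destruct (rjudg_arr _ _ _ _ Hj) as [Er Hk]. simpl in Hk. apply andb_true_iff in Hk as [Hd Hk].
    specialize (IHrty1 s ze th W HS HN). specialize (IHrty2 s ze th W HS HN).
    cbn [semD]. intros Hr xi ze' T HT n.
    assert (HT' : semC (Prod d k) (scons (ren xi ze' (inst s ze th N)) T)).
    { cbn [semC]. split; [apply semD_ren; auto|]. split; [apply SN_ren; apply RD_SN with d; auto|].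
      exact HT. }
    exact (IHrty1 Hr xi ze' _ HT' (S n)).
  -
    intros s ze th W HS HN.
    match goal with Hj : rjudg _ _ (Arr _ _) |- _ => destruct (rjudg_arr _ _ _ _ Hj) as [Er _] end. subst r.
    cbn [semD]. intros _ xi ze' T HT n.
    change (inst s ze th (Mu C)) with (Mu (instc (upS s) (upR ze) (upN th) C)). rewrite mu_ren.
    set (s2 := fun n => ren xi ze' (s n)).
    set (th2 := fun a => map (ren xi ze') (th a)).
    assert (HS2 : validS G s2) by (apply validS_ren; auto).
    assert (HN2 : validN (tailM D) th2 (fun a i => ren xi ze' (W a i))) by (apply validN_ren; auto).
    clearbody s2 th2.
    apply mu_exp with (n := length (pre T n)); auto.
    { apply Forall_pre. apply semC_SN with (getT D 0); auto. }
    rewrite mu_sem_compose.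
    set (W' := fun a => match a with 0 => fun i => ren (fun x => x) S (T i)
                                 | S b => fun i => ren (fun x => x) S (ren xi ze' (W b i)) end).
    set (th' := fun a => match a with 0 => map (ren (fun x => x) S) (pre T n)
                                 | S b => map (ren (fun x => x) S) (th2 b) end).
    assert (HN' : validN D th' W').
    { intros [|b]; simpl.
      - split; [apply semC_ren; auto|]. exists n. apply pre_map.
      - destruct (HN2 b) as [H1 [m H2]]. split; [apply semC_ren; auto|].
        exists m. rewrite H2, pre_map. reflexivity. }
    assert (HS' : validS G (upS s2)) by (intros x; unfold upS; apply semD_ren, HS2).
    specialize (IHrty (upS s2) (upR (fun n => ze' (ze n))) th' W' HS' HN').
    destruct C as [b M0]. fold th'. simpl instc.
    destruct IHrty as [HM0 [_ Hk']].
    apply SN_MuNamed.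
    destruct (HN' b) as [_ [m Hm]]. rewrite Hm.
    specialize (HM0 eq_refl (fun x => x) (fun x => x) _ Hk' m).
    rewrite ren_id in HM0. exact HM0.
  -
    intros; split; eauto.
  -
    intros. apply (sub_sound _ _ _ s0). eauto.
  -
    intros s ze th W HS HN.
    match goal with Hj : rjudg _ _ (Prod _ _) |- _ => destruct (rjudg_prod _ _ _ _ Hj) as [Hd _] end.
    specialize (IHrty s ze th W HS HN).
    cbn [semC]. split; [exact IHrty|]. split; [apply RD_SN with d; auto|].
    exact (proj1 (HN a)).
  -
    intros. destruct C. split; [apply IHrty; eauto | apply IHrty0; eauto].
  -
    intros. destruct C. apply (sub_sound _ _ _ s0). apply IHrty; eauto.
Qed.

Theorem theorem6p15 (G : basis) (D : ctx) (M : term) (d : ty) :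
  rbasis G -> rctx D -> isRD d = true -> rty G M d D -> SN M.
Proof.
  intros [_ HG] [_ HD] Hd H.
  assert (HS : validS G Var).
  { intros x. unfold getT. destruct (G x) eqn:E; simpl; auto.
    apply (proj1 (var_sem t)). apply (HG x); auto. }
  assert (HN : validN D nils (fun _ _ => Var 0)).
  { intros a. split; [|exists 0; reflexivity].
    unfold getT. destruct (D a) eqn:E; simpl.
    - apply (proj2 (var_sem t)). apply (HD a); auto.
    - intros; apply SN_var. }
  pose proof (sound _ _ _ _ H _ (fun x => x) _ _ HS HN) as Hs.
  rewrite inst_id in Hs. apply RD_SN with d; auto.
Qed.
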